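(* In the setting of problem (CP1) and the prox-ADC method described in the context, suppose Assumptions 1–4 hold. Then (a) the subproblem defining $x^{k,i+1}$ is feasible for all $k,i\in\mathbb{N}$; (b) for every $k\in\mathbb{N}$ the smallest index $i$ for which the inner stopping conditions hold, denoted $i_k$, is finite.
   Context: Problem (CP1): integers $0\le m_1\le m$; $f_p:\mathbb{R}^n\to\mathbb{R}$; $\varphi_p:\mathbb{R}\to\mathbb{R}$ convex for $p\le m_1$; $\varphi_p=\delta_{(-\infty,0]}$ for $p>m_1$; minimize $\sum_{p\le m_1}\varphi_p(f_p(x))$ s.t. $f_p(x)\le0$, $p>m_1$. $I_1=\{p:\varphi_p$ nondecreasing$\}$, $I_2=\{1,\dots,m\}\setminus I_1$. Monotonic decomposition $\varphi_p=\varphi_p^\uparrow+\varphi_p^\downarrow$: if $\varphi_p$ nondecreasing, $\varphi_p^\uparrow=\varphi_p,\varphi_p^\downarrow=0$; if nonincreasing, $\varphi_p^\uparrow=0,\varphi_p^\downarrow=\varphi_p$; otherwise with a minimizer $z^*$, $\varphi^\uparrow_p=\varphi_p(z^* )$ for $z\le z^*$, $\varphi_p(z)$ for $z>z^*$; $\varphi_p^\downarrow=\varphi_p(z)-\varphi_p(z^* )$ for $z\le z^*$, $0$ for $z>z^*$. Assumption 1: for each $p$, $f_p^k=g_p^k-h_p^k$ with $g_p^k,h_p^k:\mathbb{R}^n\to\mathbb{R}$ convex, $f_p^k$ epi-converges to $f_p$; $-\infty<\liminf_{x'\to x,k\to\infty}f_p^k(x')\le\limsup_{x'\to x,k\to\infty}f_p^k(x')<\infty$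 for all $x$; $\varphi_p\circ f_p^k$ epi-converges to $\varphi_p\circ f_p$. Assumption 2: with $X^k=\{x:f_p^k(x)\le0,\ p=m_1+1..m\}$ and $\alpha_p^k=\sup_{x\in X^k}[f_p^{k+1}(x)-f_p^k(x)]_+$, there exist $x^0$ and nonnegative $\{\widehat\alpha_p^k\}_k$ ($p>m_1$) with $\alpha_p^k\le\widehat\alpha_p^k$, $\sum_{k'}\widehat\alpha_p^{k'}<\infty$ and $f_p^0(x^0)\le-\sum_{k'=0}^\infty\widehat\alpha_p^{k'}$; set $\widehat\alpha_p^k=0$ for $p\le m_1$. Assumption 3: for each $k$ there is $\ell_k>0$ with $\min\{\mathbb H(\partial g_p^k(x),\partial g_p^k(x')),\mathbb H(\partial h_p^k(x),\partial h_p^k(x'))\}\le\ell_k\|x-x'\|$ for all $x,x'$ and all $p$ ($\mathbb H$ = Hausdorff distance). Assumption 4: for each $k$, $\sum_{p\le m_1}\varphi_p(f^k_p(x))+\sum_{p>m_1}\delta_{(-\infty,0]}(f_p^k(x))$ is level-bounded. Method: choose $\lambda>0$ and positive $\epsilon_k\downarrow0$, $\delta_k\downarrow0$ with $\delta_k/(\lambda+\ell_k)\downarrow0$; $\sigma_p^k=\sum_{k'\ge k}\widehat\alpha_p^{k'}$. For a point $y$ pick $a_p\in\partial h_p^k(y)$, $b_p\in\partial g_p^k(y)$ and set $f_p^{k,\mathrm{up}}(x;y)=g_p^k(x)-h_p^k(y)-a_p^\top(x-y)+\sigma_p^k$, $f_p^{k,\mathrm{lo}}(x;y)=g_p^k(y)+b_p^\top(x-y)-h_p^k(x)$,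 and for $p\le m_1$, $\widehat F_p^k(x;y)=\varphi_p^\uparrow(f_p^{k,\mathrm{up}}(x;y))+\varphi_p^\downarrow(f_p^{k,\mathrm{lo}}(x;y))$. For $k=0,1,\dots$: $x^{k,0}=x^k$; for $i=0,1,\dots$: $x^{k,i+1}=\operatorname{argmin}_x\{\sum_{p\le m_1}\widehat F_p^k(x;x^{k,i})+\tfrac\lambda2\|x-x^{k,i}\|^2:\ f_p^{k,\mathrm{up}}(x;x^{k,i})\le0,\ p>m_1\}$; stop the inner loop (with $i_k=i$) when $f_p^{k,\mathrm{up}}(x^{k,i+1};x^{k,i})\le f_p^k(x^{k,i+1})+\sigma_p^k+\epsilon_k$ for all $p$, $f_p^{k,\mathrm{lo}}(x^{k,i+1};x^{k,i})\ge f_p^k(x^{k,i+1})-\epsilon_k$ for $p\in I_2$, and $\|x^{k,i+1}-x^{k,i}\|\le\delta_k/(\lambda+\ell_k)$; then set $x^{k+1}=x^{k,i_k}$. *)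

(* Defs.v *)
From HB Require Import structures.
From mathcomp Require Import all_boot all_order all_algebra.
From mathcomp Require Import all_classical all_reals all_analysis.
Set Implicit Arguments. Unset Strict Implicit. Unset Printing Implicit Defensive.
Import Order.TTheory GRing.Theory Num.Theory numFieldNormedType.Exports.
Local Open Scope classical_set_scope.
Local Open Scope ring_scope.

Section Defs.
Variable R : realType.
Variable n : nat.
Notation vec := 'rV[R]_n.

Definition dotv (u v : vec) : R := \sum_(j < n) u 0 j * v 0 j.
Definition enorm (u : vec) : R := Num.sqrt (\sum_(j < n) u 0 j ^+ 2).

Definition convex_vec (f : vec -> R) : Prop :=
  forall x y (t : R), 0 <= t -> t <= 1 ->
    f (t *: x + (1 - t) *: y) <= t * f x + (1 - t) * f y.
Definition convex_R (phi : R -> R) : Prop :=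
  forall x y (t : R), 0 <= t -> t <= 1 ->
    phi (t * x + (1 - t) * y) <= t * phi x + (1 - t) * phi y.
Definition nondecr (phi : R -> R) : Prop := forall x y, x <= y -> phi x <= phi y.
Definition nonincr (phi : R -> R) : Prop := forall x y, x <= y -> phi y <= phi x.

Definition subdiff (f : vec -> R) (x : vec) : set vec :=
  [set v | forall y, f x + dotv v (y - x) <= f y].

Definition edist_pt_set (a : vec) (B : set vec) : \bar R :=
  ereal_inf [set (enorm (a - b))%:E | b in B].
Definition hausdorff (A B : set vec) : \bar R :=
  maxe (ereal_sup [set edist_pt_set a B | a in A])
       (ereal_sup [set edist_pt_set b A | b in B]).

Definition vconv (u : nat -> vec) (x : vec) : Prop :=
  forall e : R, 0 < e -> exists N, forall k, (N <= k)%N -> enorm (u k - x) < e.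

Definition epi_conv (F : nat -> vec -> \bar R) (F0 : vec -> \bar R) : Prop :=
  forall x,
    (forall u, vconv u x -> (F0 x <= limn_einf (fun k => F k (u k)))%E) /\
    (exists u, vconv u x /\ (limn_esup (fun k => F k (u k)) <= F0 x)%E).

Definition joint_liminf (F : nat -> vec -> R) (x : vec) : \bar R :=
  ereal_sup [set y | exists (r : R) (K : nat), 0 < r /\
     y = ereal_inf [set z | exists k x', (K <= k)%N /\ enorm (x' - x) < r /\
                                 z = (F k x')%:E]].
Definition joint_limsup (F : nat -> vec -> R) (x : vec) : \bar R :=
  ereal_inf [set y | exists (r : R) (K : nat), 0 < r /\
     y = ereal_sup [set z | exists k x', (K <= k)%N /\ enorm (x' - x) < r /\
                                 z = (F k x')%:E]].

Definition delta_nonpos (z : R) : \bar R := if z <= 0 then 0%E else +oo%E.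

Definition level_bounded (F : vec -> \bar R) : Prop :=
  forall alpha : R, exists M : R, forall x, (F x <= alpha%:E)%E -> enorm x <= M.

Definition decr_to_0 (u : nat -> R) : Prop :=
  (forall k, 0 < u k) /\ (forall k, u k.+1 <= u k) /\ (u n @[n --> \oo] --> (0 : R)).

End Defs.

Section Method.
Variable R : realType.
Variables n m m1 : nat.
Notation vec := 'rV[R]_n.
Variable phi : 'I_m -> R -> R.   (* phi_p for p < m1 (0-based); others unused *)
Variable g h : 'I_m -> nat -> vec -> R.
Variable zstar : 'I_m -> R.     (* chosen minimizers for the decomposition *)

(* 0-based indices: p < m1 <-> paper's p <= m1 *)
Definition fk (p : 'I_m) (k : nat) (x : vec) : R := g p k x - h p k x.

Definition Phi (p : 'I_m) (z : R) : \bar R :=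
  if (p < m1)%N then (phi p z)%:E else delta_nonpos z.

(* I_1 : phi_p nondecreasing (the indicator is nondecreasing); I_2 = complement *)
Definition inI1 (p : 'I_m) : Prop := (m1 <= p)%N \/ nondecr (phi p).
Definition inI2 (p : 'I_m) : Prop := ~ inI1 p.

Definition phi_up (p : 'I_m) (z : R) : R :=
  if `[< nondecr (phi p) >] then phi p z
  else if `[< nonincr (phi p) >] then 0
  else if z <= zstar p then phi p (zstar p) else phi p z.
Definition phi_down (p : 'I_m) (z : R) : R :=
  if `[< nondecr (phi p) >] then 0
  else if `[< nonincr (phi p) >] then phi p z
  else if z <= zstar p then phi p z - phi p (zstar p) else 0.

Definition sigma (ahat : 'I_m -> nat -> R) (p : 'I_m) (k : nat) : R :=
  fine (\sum_(k <= k' <oo) (ahat p k')%:E)%E.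

(* upper / lower models at y with chosen subgradients a (of h) and b (of g) *)
Definition f_up (ahat : 'I_m -> nat -> R) (p : 'I_m) (k : nat) (a : vec) (y x : vec) : R :=
  g p k x - h p k y - dotv a (x - y) + sigma ahat p k.
Definition f_lo (p : 'I_m) (k : nat) (b : vec) (y x : vec) : R :=
  g p k y + dotv b (x - y) - h p k x.

Definition Fhat (ahat : 'I_m -> nat -> R) (p : 'I_m) (k : nat) (a b : vec) (y x : vec) : R :=
  phi_up p (f_up ahat p k a y x) + phi_down p (f_lo p k b y x).

Definition sub_feasible (ahat : 'I_m -> nat -> R) (k : nat) (a : 'I_m -> vec) (y x : vec) : Prop :=
  forall p : 'I_m, (m1 <= p)%N -> f_up ahat p k (a p) y x <= 0.
Definition sub_obj (ahat : 'I_m -> nat -> R) (lam : R) (k : nat) (a b : 'I_m -> vec)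
    (y x : vec) : R :=
  \sum_(p < m | (p < m1)%N) Fhat ahat p k (a p) (b p) y x
  + lam / 2 * (enorm (x - y)) ^+ 2.

(* the inner stopping test at (k, i): y = x^{k,i}, x = x^{k,i+1} *)
Definition stop_test (ahat : 'I_m -> nat -> R) (lam : R) (eps dlt ell : nat -> R)
    (k : nat) (a b : 'I_m -> vec) (y x : vec) : Prop :=
  (forall p : 'I_m, f_up ahat p k (a p) y x <= fk p k x + sigma ahat p k + eps k) /\
  (forall p : 'I_m, inI2 p -> fk p k x - eps k <= f_lo p k (b p) y x) /\
  enorm (x - y) <= dlt k / (lam + ell k).

End Method.

(* Main.v *)
Require Import Defs.
From HB Require Import structures.
From mathcomp Require Import all_boot all_order all_algebra.
From mathcomp Require Import all_classical all_reals all_analysis.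
From mathcomp Require Import ring lra.
Import Order.TTheory GRing.Theory Num.Theory.
Local Open Scope classical_set_scope.
Local Open Scope ring_scope.

Lemma coord_le_enorm (R : realType) n (u : 'rV[R]_n) j : `|u 0 j| <= enorm u.
Proof.
rewrite /enorm -sqrtr_sqr ler_sqrt; last by apply: sumr_ge0 => i _; exact: sqr_ge0.
rewrite (bigD1 j) //= lerDl; apply: sumr_ge0 => i _; exact: sqr_ge0.
Qed.

Lemma enorm_ge0 (R : realType) n (u : 'rV[R]_n) : 0 <= enorm u.
Proof. exact: sqrtr_ge0. Qed.

Lemma enorm0 (R : realType) n : enorm (0 : 'rV[R]_n) = 0.
Proof. by rewrite /enorm big1 ?sqrtr0 // => i _; rewrite mxE expr0n. Qed.

Lemma dotv_bound (R : realType) n (a v : 'rV[R]_n) K e :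
  (forall j, `|a 0 j| <= K) -> (forall j, `|v 0 j| <= e) -> 0 <= K ->
  `|dotv a v| <= n%:R * (K * e).
Proof.
move=> Ha Hv K0; rewrite /dotv.
apply: (le_trans (ler_norm_sum _ _ _)).
have -> : n%:R * (K * e) = \sum_(j < n) (K * e).
  by rewrite sumr_const card_ord mulr_natl.
apply: ler_sum => j _; rewrite normrM; apply: ler_pM => //.
Qed.

Lemma dotv_delta (R : realType) n (a : 'rV[R]_n) j (s : R) :
  dotv a (s *: delta_mx 0 j) = s * a 0 j.
Proof.
rewrite /dotv (bigD1 j) //= big1 ?addr0.
  by rewrite !mxE eqxx /= eqxx mulr1 mulrC.
by move=> i /negPf Hi; rewrite !mxE Hi /= mulr0 mulr0.
Qed.

Lemma conv1 (R : realType) n (h : 'rV[R]_n -> R) (v : 'rV[R]_n) s t :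
  convex_vec h -> 0 < s -> `|t| <= s ->
  h (t *: v) <= Num.max (h (s *: v)) (h ((- s) *: v)).
Proof.
move=> hc s0 ts.
have [t1 t2] : - s <= t /\ t <= s by move: ts; rewrite ler_norml => /andP[].
set l := (t + s) / (2 * s).
have l0 : 0 <= l by rewrite divr_ge0 //; lra.
have l1 : l <= 1 by rewrite ler_pdivrMr; lra.
have -> : t *: v = l *: (s *: v) + (1 - l) *: ((- s) *: v).
  rewrite !scalerA -scalerDl; congr (_ *: _).
  rewrite /l; field; lra.
apply: (le_trans (hc _ _ _ l0 l1)).
set M := Num.max _ _.
have HA : h (s *: v) <= M by rewrite le_max lexx.
have HB : h ((- s) *: v) <= M by rewrite le_max lexx orbT.
apply: (@le_trans _ _ (l * M + (1 - l) * M)); last by rewrite -mulrDl subrKC mul1r.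
apply: lerD; apply: ler_wpM2l => //; lra.
Qed.

Lemma box_upper_k (R : realType) n (h : 'rV[R]_n -> R) : convex_vec h ->
  forall k, forall r, 0 < r -> exists B, forall x : 'rV[R]_n,
    (forall j, `|x 0 j| <= r) -> (forall j : 'I_n, (k <= j)%N -> x 0 j = 0) -> h x <= B.
Proof.
move=> hc; elim=> [|k IH] r r0.
  exists (h 0) => x _ Hx.
  have -> : x = 0 by apply/rowP => j; rewrite mxE Hx.
  by [].
have r20 : 0 < 2 * r by lra.
have [B1 HB1] := IH _ r20.
case: (ltnP k n) => kn; last first.
  exists B1 => x Hb Hz; apply: HB1.
    by move=> j; apply: (le_trans (Hb j)); lra.
  by move=> j kj; move: (ltn_ord j); rewrite ltnNge (leq_trans kn kj).
pose kk := Ordinal kn.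
pose e : 'rV[R]_n := delta_mx 0 kk.
exists ((B1 + Num.max (h ((2 * r) *: e)) (h ((- (2 * r)) *: e))) / 2) => x Hb Hz.
pose x' := x - (x 0 kk) *: e.
have Ex' : forall j, x' 0 j = if j == kk then 0 else x 0 j.
  move=> j; rewrite /x' /e !mxE eqxx /=; case: eqP => [->|_]; first by rewrite mulr1 subrr.
  by rewrite mulr0 subr0.
have -> : x = (1/2) *: (2 *: x') + (1 - 1/2) *: ((2 * x 0 kk) *: e).
  apply/rowP => j; rewrite !mxE /=; case: eqP => [->|_] /=.
    by rewrite ?eqxx /= ?mulr1 ?subrr ?mulr0; field.
  by rewrite ?mulr0 ?subr0 ?mulr0; field.
have h12 : 0 <= 1/2 :> R by lra.
have h12' : 1/2 <= 1 :> R by lra.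
apply: (le_trans (hc _ _ _ h12 h12')).
have H1 : h (2 *: x') <= B1.
  apply: HB1.
    move=> j; rewrite mxE Ex'; case: eqP => _; first by rewrite mulr0 normr0; lra.
    rewrite normrM ger0_norm; last lra.
    by apply: ler_wpM2l => //; lra.
  move=> j kj; rewrite mxE Ex'; case: eqP => [_|jk]; first by rewrite mulr0.
  rewrite Hz ?mulr0 //.
  rewrite ltn_neqAle kj andbT; apply/eqP => E; apply: jk; exact: val_inj.
have H2 : h ((2 * x 0 kk) *: e) <= Num.max (h ((2 * r) *: e)) (h ((- (2 * r)) *: e)).
  apply: conv1 => //.
  rewrite normrM ger0_norm; last lra.
  by apply: ler_wpM2l => //; lra.
have -> : (B1 + Num.max (h ((2 * r) *: e)) (h ((- (2 * r)) *: e))) / 2 =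
   1/2 * B1 + (1 - 1/2) * Num.max (h ((2 * r) *: e)) (h ((- (2 * r)) *: e)) by field.
apply: lerD; apply: ler_wpM2l => //; lra.
Qed.

Lemma box_bound (R : realType) n (h : 'rV[R]_n -> R) : convex_vec h ->
  forall r, exists C, 0 <= C /\ forall x : 'rV[R]_n, (forall j, `|x 0 j| <= r) -> `|h x| <= C.
Proof.
move=> hc r.
have r0 : 0 < `|r| + 1 by have := normr_ge0 r; lra.
have [B HB] := @box_upper_k _ _ _ hc n _ r0.
have HB' : forall x : 'rV[R]_n, (forall j, `|x 0 j| <= r) -> h x <= B.
  move=> x Hx; apply: HB.
    by move=> j; apply: (le_trans (Hx j)); have := ler_norm r; lra.
  by move=> j; rewrite leqNgt ltn_ord.
exists (`|B| + 2 * `|h 0|); split.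
  by apply: addr_ge0 => //; apply: mulr_ge0.
have nB := ler_norm B; have nh0 := normr_ge0 (h 0); have nh1 := ler_norm (h 0).
have nh2 := ler_norm (- h 0); rewrite normrN in nh2.
move=> x Hx; rewrite ler_norml; apply/andP; split; last first.
  by apply: (le_trans (HB' x Hx)); lra.
have Hm : h (- x) <= B.
  by apply: HB' => j; rewrite mxE normrN.
have h12 : 0 <= 1/2 :> R by lra.
have h12' : 1/2 <= 1 :> R by lra.
have := hc x (- x) _ h12 h12'.
have -> : 1 / 2 *: x + (1 - 1 / 2) *: - x = 0.
  by apply/rowP => j; rewrite !mxE; field.
lra.
Qed.

Lemma phi_split (R : realType) m (phi : 'I_m -> R -> R) zstar p z :
  phi_up phi zstar p z + phi_down phi zstar p z = phi p z.
Proof.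
rewrite /phi_up /phi_down.
case: (asboolP (nondecr (phi p))) => _; first by rewrite addr0.
case: (asboolP (nonincr (phi p))) => _; first by rewrite add0r.
by case: ifP => _; [rewrite addrC subrK | rewrite addr0].
Qed.

Lemma conv_mono_right (R : realType) (ph : R -> R) zs z1 z2 :
  convex_R ph -> (forall z, ph zs <= ph z) -> zs <= z1 -> z1 <= z2 -> ph z1 <= ph z2.
Proof.
move=> hc hmin h1 h2.
have [E|ne] := eqVneq z2 zs.
  rewrite E in h2 *.
  have -> : z1 = zs by apply/eqP; rewrite eq_le h1 h2.
  by [].
have d0 : 0 < z2 - zs by rewrite subr_gt0 lt_neqAle eq_sym ne /=; lra.
set t := (z1 - zs) / (z2 - zs).
have t0 : 0 <= t by rewrite divr_ge0 //; lra.
have t1 : t <= 1 by rewrite ler_pdivrMr //; lra.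
have -> : z1 = t * z2 + (1 - t) * zs by rewrite /t; field; lra.
apply: (le_trans (hc _ _ _ t0 t1)).
have := hmin z2; have : 0 <= 1 - t by lra.
move=> H1 H2.
have : (1 - t) * ph zs <= (1 - t) * ph z2 by apply: ler_wpM2l.
lra.
Qed.

Lemma conv_mono_left (R : realType) (ph : R -> R) zs z1 z2 :
  convex_R ph -> (forall z, ph zs <= ph z) -> z1 <= z2 -> z2 <= zs -> ph z2 <= ph z1.
Proof.
move=> hc hmin h1 h2.
pose ps := fun z => ph (- z).
have hc' : convex_R ps.
  move=> x y t t0 t1; rewrite /ps.
  have -> : - (t * x + (1 - t) * y) = t * (- x) + (1 - t) * (- y) by ring.
  exact: hc.
have := @conv_mono_right _ ps (- zs) (- z2) (- z1) hc'.
rewrite /ps !opprK; apply.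
- by move=> z; exact: hmin.
- by rewrite lerN2.
- by rewrite lerN2.
Qed.

Lemma phi_up_mono (R : realType) m (phi : 'I_m -> R -> R) zstar p z1 z2 :
  convex_R (phi p) -> (~ nondecr (phi p) -> ~ nonincr (phi p) -> forall z, phi p (zstar p) <= phi p z) ->
  z1 <= z2 -> phi_up phi zstar p z1 <= phi_up phi zstar p z2.
Proof.
move=> hc hmin h12; rewrite /phi_up.
case: (asboolP (nondecr (phi p))) => nd; first exact: nd.
case: (asboolP (nonincr (phi p))) => ni //.
have hm := hmin nd ni.
case: ifP => H1; case: ifP => H2.
- by [].
- exact: hm.
- by move/negbT: H1; rewrite -ltNge => H1; move: H2 h12; lra.
- move/negbT: H1; rewrite -ltNge => H1; apply: (@conv_mono_right _ _ (zstar p)) => //; lra.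
Qed.

Lemma phi_down_anti (R : realType) m (phi : 'I_m -> R -> R) zstar p z1 z2 :
  convex_R (phi p) -> (~ nondecr (phi p) -> ~ nonincr (phi p) -> forall z, phi p (zstar p) <= phi p z) ->
  z1 <= z2 -> phi_down phi zstar p z2 <= phi_down phi zstar p z1.
Proof.
move=> hc hmin h12; rewrite /phi_down.
case: (asboolP (nondecr (phi p))) => nd //.
case: (asboolP (nonincr (phi p))) => ni; first exact: ni.
have hm := hmin nd ni.
case: ifP => H2; case: ifP => H1.
- rewrite lerD2r; apply: (@conv_mono_left _ _ (zstar p)) => //.
- by move/negbT: H1; rewrite -ltNge => H1; move: H2 h12; lra.
- by rewrite subr_ge0.
- by [].
Qed.

Lemma conv1_lower (R : realType) (ph : R -> R) : convex_R ph ->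
  forall B, exists L, forall z, `|z| <= B -> L <= ph z.
Proof.
move=> hc B.
set B' := `|B| + 1.
have B0 : 0 < B' by have := normr_ge0 B; rewrite /B'; lra.
have up : forall z, `|z| <= B' -> ph z <= Num.max (ph B') (ph (- B')).
  move=> z; rewrite ler_norml => /andP[z1 z2].
  set l := (z + B') / (2 * B').
  have l0 : 0 <= l by rewrite divr_ge0 //; lra.
  have l1 : l <= 1 by rewrite ler_pdivrMr; lra.
  have -> : z = l * B' + (1 - l) * (- B') by rewrite /l; field; lra.
  apply: (le_trans (hc _ _ _ l0 l1)).
  set M := Num.max _ _.
  have HA : ph B' <= M by rewrite le_max lexx.
  have HB : ph (- B') <= M by rewrite le_max lexx orbT.
  have : l * ph B' <= l * M by apply: ler_wpM2l.
  have : (1 - l) * ph (- B') <= (1 - l) * M by apply: ler_wpM2l; lra.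
  lra.
exists (2 * ph 0 - Num.max (ph B') (ph (- B'))) => z zB.
have zB' : `|z| <= B' by have := ler_norm B; rewrite /B'; lra.
have := up (- z); rewrite normrN => /(_ zB') H.
have h12 : 0 <= 1/2 :> R by lra.
have h12' : 1/2 <= 1 :> R by lra.
have := hc z (- z) _ h12 h12'.
have -> : 1 / 2 * z + (1 - 1 / 2) * - z = 0 by field.
lra.
Qed.

Lemma subgrad_bound (R : realType) n (h : 'rV[R]_n -> R) (y a : 'rV[R]_n) M C :
  subdiff h y a -> (forall j, `|y 0 j| <= M) ->
  (forall x : 'rV[R]_n, (forall j, `|x 0 j| <= M + 1) -> `|h x| <= C) ->
  forall j, `|a 0 j| <= 2 * C.
Proof.
move=> ha hy hC j.
have key : forall s : R, `|s| <= 1 -> s * a 0 j <= 2 * C.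
  move=> s s1.
  have := ha (y + s *: delta_mx 0 j).
  have -> : y + s *: delta_mx 0 j - y = s *: delta_mx 0 j by rewrite addrC addKr.
  rewrite dotv_delta => H.
  have Hz : `|h (y + s *: delta_mx 0 j)| <= C.
    apply: hC => i; rewrite !mxE.
    apply: (le_trans (ler_normD _ _)); apply: lerD; first exact: hy.
    rewrite normrM; apply: (le_trans (ler_piMr _ _)) => //.
    by case: ((0:'I_1) == 0) => /=; case: (i == j) => //=; rewrite ?normr1 ?normr0.
  have Hy : `|h y| <= C by apply: hC => i; apply: (le_trans (hy i)); lra.
  move: Hz Hy; rewrite !ler_norml => /andP[? ?] /andP[? ?]; lra.
rewrite ler_norml; apply/andP; split.
  by have := key (-1); rewrite normrN normr1 lexx mulN1r => /(_ isT); lra.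
by have := key 1; rewrite normr1 lexx mul1r => /(_ isT).
Qed.

Lemma sigma_zero (R : realType) m (ahat : 'I_m -> nat -> R) p k :
  (forall k, ahat p k = 0) -> sigma ahat p k = 0.
Proof.
move=> H; rewrite /sigma eseries0 // => i _ _; by rewrite H.
Qed.

Lemma sigma_ge0 (R : realType) m (ahat : 'I_m -> nat -> R) p k :
  (forall k, 0 <= ahat p k) -> 0 <= sigma ahat p k.
Proof.
move=> H; rewrite /sigma; apply: fine_ge0; apply: nneseries_ge0 => i _ _.
by rewrite lee_fin.
Qed.

Lemma tail_fin (R : realType) m (ahat : 'I_m -> nat -> R) p k :
  (forall k, 0 <= ahat p k) -> (\sum_(0 <= k' <oo) (ahat p k')%:E < +oo)%E ->
  (\sum_(k <= k' <oo) (ahat p k')%:E)%E \is a fin_num.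
Proof.
move=> H0 Hf.
have g0 : forall j, (0 <= j)%N -> (0 <= (ahat p j)%:E)%E by move=> j _; rewrite lee_fin.
have := @nneseries_split _ _ _ k g0; rewrite add0n => E.
rewrite ge0_fin_numE; last by apply: nneseries_ge0 => i _ _; rewrite lee_fin.
apply: (le_lt_trans _ Hf); rewrite E leeDr //.
by apply: sume_ge0 => i _; rewrite lee_fin.
Qed.

Lemma sigma_step (R : realType) m (ahat : 'I_m -> nat -> R) p k :
  (forall k, 0 <= ahat p k) -> (\sum_(0 <= k' <oo) (ahat p k')%:E < +oo)%E ->
  sigma ahat p k = ahat p k + sigma ahat p k.+1.
Proof.
move=> H0 Hf.
have g0 : forall j, (k <= j)%N -> (0 <= (ahat p j)%:E)%E by move=> j _; rewrite lee_fin.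
rewrite /sigma (@nneseries_split _ _ _ 1 g0) addn1 big_nat1 fineD //.
exact: tail_fin.
Qed.

Lemma sigma0E (R : realType) m (ahat : 'I_m -> nat -> R) p :
  (forall k, 0 <= ahat p k) -> (\sum_(0 <= k' <oo) (ahat p k')%:E < +oo)%E ->
  ((sigma ahat p 0)%:E = \sum_(0 <= k' <oo) (ahat p k')%:E)%E.
Proof.
move=> H0 Hf; rewrite /sigma fineK //; exact: tail_fin.
Qed.

Lemma dotv0 (R : realType) n (a : 'rV[R]_n) : dotv a 0 = 0.
Proof. by rewrite /dotv big1 // => j _; rewrite mxE mulr0. Qed.

Lemma up_ge (R : realType) n m (g h : 'I_m -> nat -> 'rV[R]_n -> R) ahat p k a y x :
  subdiff (h p k) y a -> fk g h p k x + sigma ahat p k <= f_up g h ahat p k a y x.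
Proof. move=> /(_ x) H; rewrite /fk /f_up; lra. Qed.

Lemma lo_le (R : realType) n m (g h : 'I_m -> nat -> 'rV[R]_n -> R) p k b y x :
  subdiff (g p k) y b -> f_lo g h p k b y x <= fk g h p k x.
Proof. move=> /(_ x) H; rewrite /fk /f_lo; lra. Qed.

Lemma up_self (R : realType) n m (g h : 'I_m -> nat -> 'rV[R]_n -> R) ahat p k a y :
  f_up g h ahat p k a y y = fk g h p k y + sigma ahat p k.
Proof. by rewrite /f_up /fk subrr dotv0 subr0. Qed.

Lemma lo_self (R : realType) n m (g h : 'I_m -> nat -> 'rV[R]_n -> R) p k b y :
  f_lo g h p k b y y = fk g h p k y.
Proof. by rewrite /f_lo /fk subrr dotv0 addr0. Qed.

Lemma coord_diff (R : realType) n (x y : 'rV[R]_n) j :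
  `|(y - x) 0 j| <= enorm (x - y) /\ `|(x - y) 0 j| <= enorm (x - y).
Proof.
split; last exact: coord_le_enorm.
have := @coord_le_enorm _ _ (x - y) j; by rewrite !mxE distrC.
Qed.

Lemma lin_err (R : realType) n (h : 'rV[R]_n -> R) (x y a a' : 'rV[R]_n) K :
  subdiff h x a' -> (forall j, `|a 0 j| <= K) -> (forall j, `|a' 0 j| <= K) -> 0 <= K ->
  h x - h y - dotv a (x - y) <= 2 * (n%:R * (K * enorm (x - y))).
Proof.
move=> /(_ y) H ha ha' K0.
have b1 := @dotv_bound _ _ _ _ _ _ ha' (fun j => (@coord_diff _ _ x y j).1) K0.
have b2 := @dotv_bound _ _ _ _ _ _ ha (fun j => (@coord_diff _ _ x y j).2) K0.
have := ler_norm (- dotv a' (y - x)); rewrite normrN.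
have := ler_norm (- dotv a (x - y)); rewrite normrN.
lra.
Qed.

Lemma le_sum_one (R : realType) m (F : 'I_m -> R) p :
  (forall q, 0 <= F q) -> F p <= \sum_q F q.
Proof.
move=> H; rewrite (bigD1 p) //= lerDl; apply: sumr_ge0 => q _; exact: H.
Qed.

Lemma first_index (P : nat -> Prop) : (exists i, P i) ->
  exists i, P i /\ forall i', (i' < i)%N -> ~ P i'.
Proof.
move=> [N PN]; elim/ltn_ind: N PN => N IH PN.
case: (pselect (exists i', (i' < N)%N /\ P i')) => [[i' [lt Pi']]|no].
  exact: IH lt Pi'.
exists N; split => // i' lt Pi'; apply: no; by exists i'.
Qed.

Lemma archi_ex (R : realType) (q D : R) : 0 < q ->
  exists i : nat, D < i%:R * q.
Proof.
move=> q0; exists (Num.bound (`|D| / q)).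
have := @Num.Theory.archi_boundP R (`|D| / q) (divr_ge0 (normr_ge0 _) (ltW q0)).
rewrite ltr_pdivrMr // => H; apply: le_lt_trans H; exact: ler_norm.
Qed.

Theorem theorem4p2 (R : realType) (n m m1 : nat)
  (f : 'I_m -> 'rV[R]_n -> R)
  (phi : 'I_m -> R -> R)
  (g h : 'I_m -> nat -> 'rV[R]_n -> R)
  (zstar : 'I_m -> R)
  (ell : nat -> R)
  (x0 : 'rV[R]_n) (ahat : 'I_m -> nat -> R)
  (lam : R) (eps dlt : nat -> R)
  (xs : nat -> nat -> 'rV[R]_n)
  (a b : nat -> nat -> 'I_m -> 'rV[R]_n) :
  (m1 <= m)%N ->
  (* phi_p convex for p <= m1 *)
  (forall p : 'I_m, (p < m1)%N -> convex_R (phi p)) ->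
  (* the minimizer used in the monotonic decomposition *)
  (forall p : 'I_m, (p < m1)%N -> ~ nondecr (phi p) -> ~ nonincr (phi p) ->
      forall z, phi p (zstar p) <= phi p z) ->
  (* Assumption 1 *)
  (forall (p : 'I_m) k, convex_vec (g p k) /\ convex_vec (h p k)) ->
  (forall p : 'I_m, epi_conv (fun k x => (fk g h p k x)%:E) (fun x => (f p x)%:E)) ->
  (forall (p : 'I_m) x, (-oo < joint_liminf (fk g h p) x)%E /\
               (joint_liminf (fk g h p) x <= joint_limsup (fk g h p) x)%E /\
               (joint_limsup (fk g h p) x < +oo)%E) ->
  (forall p : 'I_m, epi_conv (fun k x => Phi m1 phi p (fk g h p k x))
                      (fun x => Phi m1 phi p (f p x))) ->
  (* Assumption 2 *)
  (forall (p : 'I_m) k, 0 <= ahat p k) ->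
  (forall (p : 'I_m) k, (p < m1)%N -> ahat p k = 0) ->
  (forall p : 'I_m, (m1 <= p)%N ->
     (\sum_(0 <= k' <oo) (ahat p k')%:E < +oo)%E /\
     (forall k, (ereal_sup [set (Num.max (fk g h p k.+1 x - fk g h p k x) 0)%R%:E
                            | x in [set x | forall q : 'I_m, (m1 <= q)%N -> (fk g h q k x <= 0)%R]]
                 <= (ahat p k)%:E)%E) /\
     ((fk g h p 0 x0)%:E <= - \sum_(0 <= k' <oo) (ahat p k')%:E)%E) ->
  (* Assumption 3 *)
  (forall k, 0 < ell k) ->
  (forall k (p : 'I_m) x x',
     (mine (hausdorff (subdiff (g p k) x) (subdiff (g p k) x'))
           (hausdorff (subdiff (h p k) x) (subdiff (h p k) x'))
       <= (ell k * enorm (x - x'))%:E)%E) ->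
  (* Assumption 4 *)
  (forall k, level_bounded
     (fun x => ((\sum_(p < m | (p < m1)%N) phi p (fk g h p k x))%:E
               + \sum_(p < m | (m1 <= p)%N) delta_nonpos (fk g h p k x))%E)) ->
  (* parameters of the method *)
  0 < lam -> decr_to_0 eps -> decr_to_0 dlt ->
  decr_to_0 (fun k => dlt k / (lam + ell k)) ->
  (* the iterates x^{k,i} = xs k i, with chosen subgradients *)
  xs 0%N 0%N = x0 ->
  (forall k i (p : 'I_m), subdiff (h p k) (xs k i) (a k i p) /\
                 subdiff (g p k) (xs k i) (b k i p)) ->
  (* x^{k,i+1} is the minimizer of the subproblem, whenever it is feasible *)
  (forall k i, (exists x, sub_feasible m1 g h ahat k (a k i) (xs k i) x) ->
     sub_feasible m1 g h ahat k (a k i) (xs k i) (xs k i.+1) /\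
     forall x, sub_feasible m1 g h ahat k (a k i) (xs k i) x ->
       sub_obj m1 phi g h zstar ahat lam k (a k i) (b k i) (xs k i) (xs k i.+1)
       <= sub_obj m1 phi g h zstar ahat lam k (a k i) (b k i) (xs k i) x) ->
  (* x^{k+1} = x^{k, i_k}, with i_k the first index passing the stopping test *)
  (forall k i, stop_test m1 phi g h ahat lam eps dlt ell k (a k i) (b k i) (xs k i) (xs k i.+1) ->
     (forall i', (i' < i)%N ->
        ~ stop_test m1 phi g h ahat lam eps dlt ell k (a k i') (b k i') (xs k i') (xs k i'.+1)) ->
     xs k.+1 0%N = xs k i) ->
  (* (a) every subproblem is feasible, (b) every inner loop terminates *)
  (forall k i, exists x, sub_feasible m1 g h ahat k (a k i) (xs k i) x) /\
  (forall k, exists i,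
     stop_test m1 phi g h ahat lam eps dlt ell k (a k i) (b k i) (xs k i) (xs k i.+1)).
Proof.
move=> m1m Hconv Hzmin Hgh _ _ _ Ha0 Ha_lt HA2 Hell _ HA4 lam0 Heps Hdlt Hdl Hx0 Hsub Hmin Hnext.
pose G := fun k x => \sum_(p < m | (p < m1)%N) phi p (fk g h p k x).
have sig0 : forall (p : 'I_m) k, (p < m1)%N -> sigma ahat p k = 0.
  by move=> p k pm; apply: sigma_zero => k1; exact: (Ha_lt p k1 pm).
have sigge0 : forall (p : 'I_m) k, 0 <= sigma ahat p k by move=> p k; apply: sigma_ge0.
pose Inv k i := forall p : 'I_m, (m1 <= p)%N -> fk g h p k (xs k i) + sigma ahat p k <= 0.
have feas : forall k i, Inv k i -> sub_feasible m1 g h ahat k (a k i) (xs k i) (xs k i).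
  by move=> k i I p pm; rewrite up_self; exact: I.
have inv_step : forall k i, Inv k i -> Inv k i.+1.
  move=> k i I p pm.
  have [F _] := Hmin k i (ex_intro _ _ (feas k i I)).
  apply: le_trans (F p pm); apply: up_ge; exact: (Hsub k i p).1.
have inv_all : forall k, Inv k 0%N -> forall i, Inv k i.
  by move=> k I; elim=> // i IH; exact: inv_step.
have descent : forall k i, Inv k i ->
   G k (xs k i.+1) + lam / 2 * enorm (xs k i.+1 - xs k i) ^+ 2 <= G k (xs k i).
  move=> k i I.
  have [_ M] := Hmin k i (ex_intro _ _ (feas k i I)).
  have := M _ (feas k i I).
  rewrite /sub_obj subrr enorm0 expr0n /= mulr0 addr0.
  have -> : \sum_(p < m | (p < m1)%N) Fhat phi g h zstar ahat p k (a k i p) (b k i p) (xs k i) (xs k i) = G k (xs k i).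
    apply: eq_bigr => p pm; rewrite /Fhat up_self lo_self sig0 // addr0; exact: phi_split.
  apply: le_trans; rewrite lerD2r; apply: ler_sum => p pm.
  rewrite /Fhat -(@phi_split _ _ phi zstar); apply: lerD.
  - apply: phi_up_mono; [exact: Hconv|exact: Hzmin|].
    have := @up_ge _ _ _ g h ahat p k (a k i p) (xs k i) (xs k i.+1) (Hsub k i p).1.
    by rewrite sig0 // addr0.
  - apply: phi_down_anti; [exact: Hconv|exact: Hzmin|]; apply: lo_le; exact: (Hsub k i p).2.
have inner : forall k, Inv k 0%N -> exists i,
    stop_test m1 phi g h ahat lam eps dlt ell k (a k i) (b k i) (xs k i) (xs k i.+1).
  move=> k I0.
  have Ik := inv_all k I0.
  have lam2 : 0 < lam / 2 by apply: divr_gt0.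
  have Gdec : forall i, G k (xs k i) <= G k (xs k 0%N).
    elim=> // i IH; apply: le_trans IH; apply: le_trans (descent k i (Ik i)).
    by rewrite lerDl; apply: mulr_ge0; [exact: ltW|exact: sqr_ge0].
  have [M HM] := HA4 k (G k (xs k 0%N)).
  have bnd : forall i j, `|xs k i 0 j| <= M.
    move=> i j; apply: le_trans (@coord_le_enorm _ _ (xs k i) j) _; apply: HM.
    rewrite [X in (_ + X)%E]big1 ?adde0 ?lee_fin; first exact: Gdec.
    move=> p pm; rewrite /delta_nonpos ifT //.
    by have := Ik i p pm; have := sigge0 p k; lra.
  have [Cg HCg] := choice (fun p => @box_bound _ _ _ (Hgh p k).1 (M + 1)).
  have [Ch HCh] := choice (fun p => @box_bound _ _ _ (Hgh p k).2 (M + 1)).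
  pose C := \sum_p (Cg p + Ch p).
  have CgC : forall p, Cg p <= C.
    move=> p; apply: le_trans (@le_sum_one _ _ (fun q => Cg q + Ch q) p _).
      by rewrite lerDl; exact: (HCh p).1.
    by move=> q; apply: addr_ge0; [exact: (HCg q).1|exact: (HCh q).1].
  have ChC : forall p, Ch p <= C.
    move=> p; apply: le_trans (@le_sum_one _ _ (fun q => Cg q + Ch q) p _).
      by rewrite lerDr; exact: (HCg p).1.
    by move=> q; apply: addr_ge0; [exact: (HCg q).1|exact: (HCh q).1].
  have C0 : 0 <= C.
    by apply: sumr_ge0 => q _; apply: addr_ge0; [exact: (HCg q).1|exact: (HCh q).1].
  have box1 : forall i j, `|xs k i 0 j| <= M + 1 by move=> i j; have := bnd i j; lra.
  have gC : forall (p : 'I_m) (x : 'rV[R]_n), (forall j, `|x 0 j| <= M + 1) -> `|g p k x| <= C.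
    by move=> p x Hx; apply: le_trans (CgC p); exact: (HCg p).2.
  have hC : forall (p : 'I_m) (x : 'rV[R]_n), (forall j, `|x 0 j| <= M + 1) -> `|h p k x| <= C.
    by move=> p x Hx; apply: le_trans (ChC p); exact: (HCh p).2.
  pose K := 2 * C.
  have K0 : 0 <= K by rewrite /K; lra.
  have Ka : forall i (p : 'I_m) j, `|a k i p 0 j| <= K.
    move=> i p j; apply: (@subgrad_bound _ _ (h p k) (xs k i) _ M C (Hsub k i p).1 (bnd i)) => x Hx.
    exact: hC.
  have Kb : forall i (p : 'I_m) j, `|b k i p 0 j| <= K.
    move=> i p j; apply: (@subgrad_bound _ _ (g p k) (xs k i) _ M C (Hsub k i p).2 (bnd i)) => x Hx.
    exact: gC.
  have HLex : forall p : 'I_m, exists L : R, (p < m1)%N -> forall z, `|z| <= 2 * C -> L <= phi p z.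
    move=> p; case: (ltnP p m1) => pm.
      by have [L HL] := @conv1_lower _ _ (Hconv p pm) (2 * C); exists L.
    by exists 0.
  have [L HL] := choice HLex.
  have Glow : forall i, \sum_(p < m | (p < m1)%N) L p <= G k (xs k i).
    move=> i; apply: ler_sum => p pm; apply: HL => //.
    rewrite /fk; apply: le_trans (ler_normB _ _) _.
    by have := gC p (xs k i) (box1 i); have := hC p (xs k i) (box1 i); lra.
  pose T := 2 * (n%:R * K).
  have T0 : 0 <= T by rewrite /T; apply: mulr_ge0 => //; apply: mulr_ge0.
  have epsk := Heps.1 k.
  have dlk := Hdl.1 k.
  pose c := Num.min (eps k / (T + 1)) (dlt k / (lam + ell k)).
  have c0 : 0 < c by rewrite /c lt_min; apply/andP; split => //; apply: divr_gt0 => //; lra.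
  have [i Hi] : exists i, enorm (xs k i.+1 - xs k i) <= c.
    case: (pselect (exists i, enorm (xs k i.+1 - xs k i) <= c)) => // no.
    have lt : forall i, c < enorm (xs k i.+1 - xs k i).
      by move=> i; rewrite ltNge; apply/negP => H; apply: no; exists i.
    pose q := lam / 2 * c ^+ 2.
    have q0 : 0 < q by apply: mulr_gt0 => //; apply: exprn_gt0.
    have acc : forall i, G k (xs k i) + i%:R * q <= G k (xs k 0%N).
      elim=> [|i IH]; first by rewrite mul0r addr0.
      have d := descent k i (Ik i).
      have : q <= lam / 2 * enorm (xs k i.+1 - xs k i) ^+ 2.
        rewrite /q; apply: ler_wpM2l; first exact: ltW.
        by rewrite !expr2; apply: ler_pM; [exact: ltW|exact: ltW|exact: ltW (lt i)|exact: ltW (lt i)].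
      have -> : (i.+1)%:R * q = i%:R * q + q by rewrite -natr1 mulrDl mul1r.
      lra.
    have [N HN] := @archi_ex _ _ (G k (xs k 0%N) - \sum_(p < m | (p < m1)%N) L p) q0.
    by have := acc N; have := Glow N; lra.
  set x := xs k i.+1 in Hi *; set y := xs k i in Hi *.
  set d := enorm (x - y) in Hi *.
  have d0 : 0 <= d by exact: enorm_ge0.
  have ebound : 2 * (n%:R * (K * d)) <= eps k.
    have dle : d <= eps k / (T + 1) by apply: le_trans Hi _; rewrite /c ge_min lexx.
    move: dle; rewrite ler_pdivlMr; last lra.
    have -> : 2 * (n%:R * (K * d)) = T * d by rewrite /T; ring.
    have -> : d * (T + 1) = T * d + d by ring.
    lra.
  exists i; split; [|split].
  - move=> p.
    have := @lin_err _ _ (h p k) x y (a k i p) (a k i.+1 p) K (Hsub k i.+1 p).1 (Ka i p) (Ka i.+1 p) K0.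
    rewrite -/d /f_up /fk; lra.
  - move=> p _.
    have := @lin_err _ _ (g p k) x y (b k i p) (b k i.+1 p) K (Hsub k i.+1 p).2 (Kb i p) (Kb i.+1 p) K0.
    rewrite -/d /f_lo /fk; lra.
  - by apply: le_trans Hi _; rewrite /c ge_min lexx orbT.
have inv0 : forall k, Inv k 0%N.
  elim=> [|k IH].
  - move=> p pm; rewrite Hx0.
    have [Hf [_ H0]] := HA2 p pm.
    move: H0; rewrite -(@sigma0E _ _ ahat p (Ha0 p) Hf) -EFinN lee_fin; lra.
  - have [i [Si Hmi]] := @first_index _ (inner k IH).
    have E := Hnext k i Si Hmi.
    move=> p pm; rewrite E.
    have Ii := inv_all k IH i p pm.
    have [Hf [Hs _]] := HA2 p pm.
    have inX : forall q : 'I_m, (m1 <= q)%N -> fk g h q k (xs k i) <= 0.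
      by move=> q qm; have := inv_all k IH i q qm; have := sigge0 q k; lra.
    have Hub := @ereal_sup_ubound _ [set (Num.max (fk g h p k.+1 x - fk g h p k x) 0)%R%:E
                            | x in [set x | forall q : 'I_m, (m1 <= q)%N -> (fk g h q k x <= 0)%R]]
                  ((Num.max (fk g h p k.+1 (xs k i) - fk g h p k (xs k i)) 0)%:E) (ex_intro2 _ _ (xs k i) inX erefl).
    have := le_trans Hub (Hs k); rewrite lee_fin => Hmax.
    have Hmx : fk g h p k.+1 (xs k i) - fk g h p k (xs k i) <= Num.max (fk g h p k.+1 (xs k i) - fk g h p k (xs k i)) 0.
      by rewrite le_max lexx.
    have ss := @sigma_step _ _ ahat p k (Ha0 p) Hf.
    lra.
split.
- move=> k i; exists (xs k i); apply: feas; exact: inv_all.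
- move=> k; exact: inner.
Qed.
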